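(* Let $n>3$ and let $A=[A_1,\ldots,A_n]$ be an $n\times n\times n$ ASHM in which every line contains at most one entry equal to $-1$ (a near-permutation hypermatrix). Then $L(A)=1A_1+\cdots+nA_n$ has no constant row and no constant column.
   Context: An $n\times n$ alternating sign matrix (ASM) is an $n\times n$ matrix with entries in $\{0,1,-1\}$ such that in every row and column the nonzeros alternate in sign, beginning and ending with $+1$. An $n\times n\times n$ hypermatrix $A=[a_{ijk}]$ is written $A=[A_1,\ldots,A_n]$ with $A_k=[a_{ijk}]_{i,j}$; lines are obtained by fixing two of the three indices. $A$ is an ASHM if all entries lie in $\{0,\pm1\}$ and in every line the nonzeros alternate in sign beginning and ending with $+1$. A line of a matrix is constant if all its entries are equal. *)

(* Defs.v *)
From mathcomp Require Import all_boot all_order all_algebra.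
Set Implicit Arguments. Unset Strict Implicit. Unset Printing Implicit Defensive.
Import Order.TTheory GRing.Theory Num.Theory.
Local Open Scope ring_scope.

(* An n x n x n hypermatrix with integer entries: A i j k = a_{ijk}
   (indices 0-based; the paper's index k corresponds to k+1). *)
Definition hmx (n : nat) := 'I_n -> 'I_n -> 'I_n -> int.

Definition alt_sign_seq (s : seq int) : bool :=
  let t := [seq x <- s | x != 0] in
  [&& all (fun x => (x == 0) || (x == 1) || (x == -1)) s,
      t != [::],
      head 0 t == 1,
      last 0 t == 1 &
      all (fun p => p.1 == - p.2) (zip t (behead t))].

Definition line1 n (A : hmx n) (j k : 'I_n) : seq int := [seq A i j k | i <- enum 'I_n].
Definition line2 n (A : hmx n) (i k : 'I_n) : seq int := [seq A i j k | j <- enum 'I_n].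
Definition line3 n (A : hmx n) (i j : 'I_n) : seq int := [seq A i j k | k <- enum 'I_n].

Definition is_ASHM n (A : hmx n) : Prop :=
  (forall j k, alt_sign_seq (line1 A j k)) /\
  (forall i k, alt_sign_seq (line2 A i k)) /\
  (forall i j, alt_sign_seq (line3 A i j)).

Definition near_perm n (A : hmx n) : Prop :=
  (forall j k, (count (pred1 (-1 : int)) (line1 A j k) <= 1)%N) /\
  (forall i k, (count (pred1 (-1 : int)) (line2 A i k) <= 1)%N) /\
  (forall i j, (count (pred1 (-1 : int)) (line3 A i j) <= 1)%N).

Definition LA n (A : hmx n) : 'M[int]_n :=
  \matrix_(i, j) \sum_(k < n) (k.+1)%:Z * A i j k.

Definition const_row n (M : 'M[int]_n) (i : 'I_n) : Prop :=
  forall j j' : 'I_n, M i j = M i j'.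
Definition const_col n (M : 'M[int]_n) (j : 'I_n) : Prop :=
  forall i i' : 'I_n, M i j = M i' j.

(* Main.v *)
Require Import Defs.
From mathcomp Require Import all_boot all_order all_algebra zify.
Import Order.TTheory GRing.Theory Num.Theory.
Local Open Scope ring_scope.
Set Implicit Arguments. Unset Strict Implicit.

Lemma zipbad (P : int * int -> bool) (u w : seq int) a b :
  all P (zip (u ++ a :: b :: w) (behead (u ++ a :: b :: w))) -> P (a, b).
Proof.
elim: u => [|x u IH] /=; first by case/andP.
case: u IH => [|y u] IH /=; case/andP => _; exact: IH.
Qed.

Lemma L_head (x y : int) w : alt_sign_seq (x :: y :: w) -> x != -1 /\ (y = -1 -> x = 1).
Proof.
case/and5P => _ _ hd _ _; move: hd => /=.
case: (eqVneq x 0) => [->|nx] /=.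
  move=> hd; split => // ey; move: hd; rewrite ey /=. done.
by move/eqP => ->.
Qed.

Lemma L_last (u : seq int) y x : alt_sign_seq (u ++ [:: y; x]) -> x != -1 /\ (y = -1 -> x = 1).
Proof.
case/and5P => _ _ _ ls _; move: ls; rewrite filter_cat last_cat /=.
case: (eqVneq x 0) => [->|nx] /=.
  move=> hd; split => // ey; move: hd; rewrite ey /=. done.
by case: (y != 0) => /= /eqP ->.
Qed.

Lemma L_mid (u w : seq int) : alt_sign_seq (u ++ 1 :: 1 :: w) -> False.
Proof.
case/and5P => _ _ _ _; rewrite filter_cat /=.
by move/zipbad.
Qed.

Lemma L_single (s : seq int) : alt_sign_seq s -> (forall x, x \in s -> x != -1) ->
  count (fun x => x != 0) s = 1%N.
Proof.
case/and5P => h0 ne hd _ zz nm.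
rewrite -size_filter.
have allone : all (fun x => x == 1) [seq x <- s | x != 0].
  apply/allP => x; rewrite mem_filter => /andP [nz xs].
  move: (allP h0 x xs) (nm x xs); move: nz.
  by case/orP: (allP h0 x xs) => [/orP[]|] /eqP ->.
move: ne hd zz allone.
case: [seq x <- s | x != 0] => [|a [|b t]] //= _ /eqP -> /andP [/eqP hab _] /and3P [_ /eqP hb _].
by move: hab; rewrite hb.
Qed.

Lemma decomp (s : seq int) i : (i.+1 < size s)%N ->
  s = take i s ++ nth 0 s i :: nth 0 s i.+1 :: drop i.+2 s.
Proof.
move=> hi; rewrite -[s in LHS](cat_take_drop i) (drop_nth 0) ?(drop_nth 0 (n := i.+1)) //.
exact: ltnW.
Qed.

Section F.
Variable n : nat.
Variable f : 'I_n -> int.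
Let s := [seq f j | j <- enum 'I_n].

Lemma nth_s (j : 'I_n) : nth 0 s j = f j.
Proof. by rewrite /s (nth_map j) ?size_enum_ord ?nth_ord_enum. Qed.

Lemma size_s : size s = n.
Proof. by rewrite /s size_map size_enum_ord. Qed.

Lemma in_s (j : 'I_n) : f j \in s.
Proof. by apply: map_f; rewrite mem_enum. Qed.

Lemma F_mid (i j : 'I_n) : alt_sign_seq s -> val j = (val i).+1 -> f i = 1 -> f j = 1 -> False.
Proof.
move=> h ej fi fj.
have hi : ((val i).+1 < size s)%N by rewrite size_s -ej; apply: ltn_ord.
move: h; rewrite (decomp hi) -ej !nth_s fi fj; exact: L_mid.
Qed.

Lemma F_head (i j : 'I_n) : alt_sign_seq s -> val i = 0%N -> val j = 1%N ->
  f i != -1 /\ (f j = -1 -> f i = 1).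
Proof.
move=> h ei ej.
have hi : (0.+1 < size s)%N by rewrite size_s -ej; apply: ltn_ord.
move: h; rewrite (decomp hi) take0 /=.
by rewrite -[in nth 0 s 1]ej -ei !nth_s; exact: L_head.
Qed.

Lemma F_last (i j : 'I_n) : alt_sign_seq s -> val j = n.-1 -> val i = n.-2 -> (1 < n)%N ->
  f j != -1 /\ (f i = -1 -> f j = 1).
Proof.
move=> h ej ei n1.
have e1 : (n.-2).+1 = n.-1 by lia.
have e2 : (n.-2).+2 = n by lia.
have hi : ((n.-2).+1 < size s)%N by rewrite size_s; lia.
move: h; rewrite (decomp hi) e2 e1 drop_oversize ?size_s //.
by rewrite -ei -ej !nth_s; exact: L_last.
Qed.

Lemma F_single : alt_sign_seq s -> (forall k, f k != -1) ->
  exists a, f a = 1 /\ forall k, k != a -> f k = 0.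
Proof.
move=> h nm.
have c1 := L_single h.
have : count (fun x => x != 0) s = 1%N.
  apply: c1 => x /mapP [k _ ->]; exact: nm.
rewrite /s count_map.
have -> : count (preim f (fun x => x != 0)) (enum 'I_n) = #|[pred k | f k != 0]|.
  rewrite cardE /enum_mem size_filter count_filter; apply: eq_count => x /=. by rewrite andbT.
move/eqP/card1P => [a ha].
have fa : f a != 0 by move: (ha a); rewrite !inE eqxx.
exists a; split.
  case/and5P: h => h0 _ _ _ _.
  move: (allP h0 _ (in_s a)) (nm a) fa.
  by case/orP => [/orP[]|] /eqP ->.
move=> k nk; move: (ha k); rewrite !inE (negbTE nk).
by move/negbT; rewrite negbK => /eqP.
Qed.

End F.

Lemma F_sum n (f : 'I_n -> int) a : f a = 1 -> (forall k, k != a -> f k = 0) ->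
  \sum_(k < n) (k.+1)%:Z * f k = (a.+1)%:Z.
Proof.
move=> fa fk; rewrite (bigD1 a) //= big1 ?addr0 ?fa ?mulr1 //.
by move=> k nk; rewrite fk ?mulr0.
Qed.

Lemma no_const m (B : 'I_m.+4 -> 'I_m.+4 -> int) :
  (forall k, alt_sign_seq [seq B j k | j <- enum 'I_m.+4]) ->
  (forall j, alt_sign_seq [seq B j k | k <- enum 'I_m.+4]) ->
  (forall k, (count (pred1 (-1)%R) [seq B j k | j <- enum 'I_m.+4] <= 1)%N) ->
  ~ (forall j j', \sum_(k < m.+4) (k.+1)%:Z * B j k = \sum_(k < m.+4) (k.+1)%:Z * B j' k).
Proof.
move=> hc hr hn hconst.
pose o0 : 'I_m.+4 := ord0. pose on1 : 'I_m.+4 := ord_max.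
pose o1 : 'I_m.+4 := inord 1. pose on2 : 'I_m.+4 := inord m.+2.
have v1 : val o1 = 1%N by rewrite /= inordK.
have v2 : val on2 = m.+2 by rewrite /= inordK.
have nm0 : forall k, B o0 k != -1 := fun k => (F_head (f := fun j => B j k) (i := o0) (j := o1) (hc k) erefl v1).1.
have nm1 : forall k, B on1 k != -1 := fun k => (F_last (f := fun j => B j k) (i := on2) (j := on1) (hc k) erefl v2 isT).1.
have [a [ha0 ha]] := F_single (f := B o0) (hr o0) nm0.
have [b [hb0 hb]] := F_single (f := B on1) (hr on1) nm1.
have sa := F_sum ha0 ha.
have sb := F_sum hb0 hb.
have ab : a = b.
  apply: val_inj; move: (hconst o0 on1); rewrite sa sb. by case.
subst b.
have w1 : B o1 a = -1.
  case: (pickP (fun k => B o1 k == -1)) => [q /eqP hq | hno].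
    have h0q := (F_head (f := fun j => B j q) (i := o0) (j := o1) (hc q) erefl v1).2 hq.
    case: (eqVneq q a) => [<- //| nq]; by move: (ha q nq); rewrite h0q.
  have [c [hc0 hcc]] := F_single (f := B o1) (hr o1) (fun k => negbT (hno k)).
  have ac : a = c by apply: val_inj; move: (hconst o0 o1); rewrite sa (F_sum hc0 hcc); case.
  subst c; exfalso; exact: (F_mid (f := fun j => B j a) (i := o0) (j := o1) (hc a) v1 ha0 hc0).
have w2 : B on2 a = -1.
  case: (pickP (fun k => B on2 k == -1)) => [q /eqP hq | hno].
    have h0q := (F_last (f := fun j => B j q) (i := on2) (j := on1) (hc q) erefl v2 isT).2 hq.
    case: (eqVneq q a) => [<- //| nq]; by move: (hb q nq); rewrite h0q.
  have [c [hc0 hcc]] := F_single (f := B on2) (hr on2) (fun k => negbT (hno k)).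
  have ac : a = c by apply: val_inj; apply/esym; move: (hconst on2 on1); rewrite (F_sum hc0 hcc) sb; case.
  subst c; exfalso; exact: (F_mid (f := fun j => B j a) (i := on2) (j := on1) (hc a) (etrans (erefl (m.+3)) (congr1 S (esym v2))) hc0 hb0).
move: (hn a); rewrite count_map.
have -> : count (preim (fun j => B j a) (pred1 (-1))) (enum 'I_m.+4) = #|[pred j | B j a == -1]|.
  rewrite cardE /enum_mem size_filter count_filter; apply: eq_count => x /=. by rewrite andbT.
have ne : on2 != o1 by apply/eqP => /(congr1 val); rewrite v1 v2.
rewrite (cardD1 o1) (cardD1 on2) !inE w1 w2 ne !eqxx /=.
by [].
Qed.
Unset Implicit Arguments.
Theorem mainTheorem6 (n : nat) (A : hmx n) :
  (3 < n)%N -> is_ASHM A -> near_perm A ->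
  (forall i : 'I_n, ~ const_row (LA A) i) /\
  (forall j : 'I_n, ~ const_col (LA A) j).
Proof.
case: n A => [|[|[|[|m]]]] A // _ [h1 [h2 h3]] [c1 [c2 c3]].
split.
  move=> i hrow.
  apply: (@no_const m (fun j k => A i j k) (fun k => h2 i k) (fun j => h3 i j) (fun k => c2 i k)).
  by move=> j j'; move: (hrow j j'); rewrite !mxE.
move=> j hcol.
apply: (@no_const m (fun i k => A i j k) (fun k => h1 j k) (fun i => h3 i j) (fun k => c1 j k)).
by move=> i i'; move: (hcol i i'); rewrite !mxE.
Qed.
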